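(* For any $t_\infty,\delta,\varepsilon>0$ there exists $\eta>0$ such that for all sufficiently large $T$, \[\mathbb{P}\Big(s_T(t+\eta)\subseteq\bigcup_{y\in s_T(t)}B(y,\delta)\ \ \forall t\le t_\infty\Big)\ge1-\varepsilon.\]
   Context: $(\xi(z))_{z\in\mathbb{Z}^d}$ are i.i.d. with $\mathbb{P}(\xi(z)>x)=x^{-\alpha}$ for $x\ge1$, $\alpha>d$. $|\cdot|$ is the $\ell_1$-norm, $B(z,R)$ the open $\ell_1$-ball. $q=d/(\alpha-d)$, $a(T)=(T/\log T)^q$, $r(T)=(T/\log T)^{q+1}$, $L_T=\{z\in\mathbb{R}^d:r(T)z\in\mathbb{Z}^d\}$, $\xi_T(z)=\xi(r(T)z)/a(T)$, $[z]_T=(\lfloor r(T)z_i\rfloor/r(T))_{i=1}^d$. For $z\in L_T$, \[h_T(z)=\inf\Big\{\sum_{j=1}^n q\frac{|y_{j-1}-y_j|}{\xi_T(y_j)}: n\ge0,\ y_0,\dots,y_n\in L_T,\ y_0=z,\ y_n=0\Big\},\] and $s_T(t)=\{z\in\mathbb{R}^d: h_T([z]_T)\le t\}$. *)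

(* Defs.v *)
From HB Require Import structures.
From mathcomp Require Import all_boot all_order all_algebra.
From mathcomp Require Import all_classical all_reals all_analysis.
Set Implicit Arguments. Unset Strict Implicit. Unset Printing Implicit Defensive.
Import Order.TTheory GRing.Theory Num.Theory.
Local Open Scope classical_set_scope.
Local Open Scope ring_scope.

Section Defs.
Variable R : realType.
Variable d : nat.

Definition norm1 (v : 'rV[R]_d) : R := \sum_(i < d) `|v 0 i|.

Definition ball1 (y : 'rV[R]_d) (delta : R) : set 'rV[R]_d :=
  [set x | norm1 (x - y) < delta].

Variable alpha : R.
Definition qexp : R := d%:R / (alpha - d%:R).
Definition aT (T : R) : R := (T / ln T) `^ qexp.
Definition rT (T : R) : R := (T / ln T) `^ (qexp + 1).

Definition LT (T : R) (z : 'rV[R]_d) : Prop :=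
  exists k : 'rV[int]_d, forall i, rT T * z 0 i = (k 0 i)%:~R.

(* the integer point r(T) z (exact for z in L_T) *)
Definition toZ (T : R) (z : 'rV[R]_d) : 'rV[int]_d :=
  \row_i Num.floor (rT T * z 0 i).

Variable Omega : Type.
Variable xi : 'rV[int]_d -> Omega -> R.

Definition xiT (T : R) (w : Omega) (z : 'rV[R]_d) : R :=
  xi (toZ T z) w / aT T.

Definition hT (T : R) (w : Omega) (z : 'rV[R]_d) : R :=
  inf [set s : R | exists (n : nat) (y : nat -> 'rV[R]_d),
        [/\ (forall j, (j <= n)%N -> LT T (y j)), y 0%N = z, y n = 0 &
            s = \sum_(1 <= j < n.+1) qexp * norm1 (y j.-1 - y j) / xiT T w (y j)]].

Definition roundT (T : R) (z : 'rV[R]_d) : 'rV[R]_d :=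
  \row_i ((Num.floor (rT T * z 0 i))%:~R / rT T).

Definition sT (T : R) (w : Omega) (t : R) : set 'rV[R]_d :=
  [set z | hT T w (roundT T z) <= t].

End Defs.

Section Prob.
Local Open Scope ereal_scope.
Definition iid_pareto (R : realType) (d : nat) (alpha : R)
  (dO : measure_display) (Omega : measurableType dO) (P : probability Omega R)
  (xi : 'rV[int]_d -> Omega -> R) : Prop :=
  [/\ (forall z, measurable_fun setT (xi z)),
      (forall z (x : R), (1 <= x)%R ->
          P [set w | (x < xi z w)%R] = (x `^ (- alpha))%:E) &
      (* mutual independence: product rule over every finite subfamily *)
      (forall (s : seq 'rV[int]_d) (B : 'rV[int]_d -> set R), uniq s ->
          (forall z, measurable (B z)) ->
          P (\bigcap_(z in [set` s]) (xi z @^-1` B z)) =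
          \prod_(z <- s) P (xi z @^-1` B z))].
End Prob.

(* Main.v *)
Require Import Defs.
From HB Require Import structures.
From mathcomp Require Import all_boot all_order all_algebra.
From mathcomp Require Import all_classical all_reals all_analysis.
From mathcomp Require Import ring lra zify.
Import Order.TTheory GRing.Theory Num.Theory.
Local Open Scope classical_set_scope.
Local Open Scope ring_scope.
Set Implicit Arguments. Unset Strict Implicit. Unset Printing Implicit Defensive.

Lemma norm1_ge0 (R : realType) d (v : 'rV[R]_d) : 0 <= norm1 v.
Proof. by apply: sumr_ge0 => i _. Qed.

Lemma norm1D (R : realType) d (u v : 'rV[R]_d) : norm1 (u + v) <= norm1 u + norm1 v.
Proof.
rewrite /norm1 -big_split /=; apply: ler_sum => i _; rewrite mxE; exact: ler_normD.
Qed.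

Lemma norm1_tri (R : realType) d (u v x : 'rV[R]_d) :
  norm1 (u - x) <= norm1 (u - v) + norm1 (v - x).
Proof.
have -> : u - x = (u - v) + (v - x) by rewrite addrA subrK.
exact: norm1D.
Qed.

Lemma norm1N (R : realType) d (u : 'rV[R]_d) : norm1 (- u) = norm1 u.
Proof. by rewrite /norm1; apply: eq_bigr => i _; rewrite mxE normrN. Qed.

Lemma norm1B (R : realType) d (u v : 'rV[R]_d) : norm1 (u - v) = norm1 (v - u).
Proof. by rewrite -norm1N opprB. Qed.

Lemma norm1_coord (R : realType) d (u : 'rV[R]_d) i : `|u 0 i| <= norm1 u.
Proof.
rewrite /norm1 (bigD1 i) //= lerDl; by apply: sumr_ge0 => j _.
Qed.

Definition stp (R : realType) d (alpha : R) (Omega : Type) (xi : 'rV[int]_d -> Omega -> R)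
  (T : R) (w : Omega) (y : nat -> 'rV[R]_d) (j : nat) : R :=
  qexp d alpha * norm1 (y j.-1 - y j) / xiT alpha xi T w (y j).

Lemma stp_ge0 (R : realType) d (alpha : R) (Omega : Type) (xi : 'rV[int]_d -> Omega -> R)
  T w y j : 0 <= qexp d alpha -> (forall z, 0 <= xiT alpha xi T w z) ->
  0 <= stp alpha xi T w y j.
Proof.
move=> Hq Hx; rewrite /stp; apply: divr_ge0 => //; apply: mulr_ge0 => //; exact: norm1_ge0.
Qed.

Lemma hT_lb (R : realType) d (alpha : R) (Omega : Type) (xi : 'rV[int]_d -> Omega -> R)
  T w z : 0 <= qexp d alpha -> (forall z, 0 <= xiT alpha xi T w z) ->
  has_lbound [set s : R | exists (n : nat) (y : nat -> 'rV[R]_d),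
        [/\ (forall j, (j <= n)%N -> LT alpha T (y j)), y 0%N = z, y n = 0 &
            s = \sum_(1 <= j < n.+1) qexp d alpha * norm1 (y j.-1 - y j) / xiT alpha xi T w (y j)]].
Proof.
move=> Hq Hx; exists 0 => s [n [y [_ _ _ ->]]].
apply: sumr_ge0 => j _; exact: (@stp_ge0 _ _ _ _ xi T w y j Hq Hx).
Qed.

Lemma hT_suffix (R : realType) d (alpha : R) (Omega : Type) (xi : 'rV[int]_d -> Omega -> R)
  T w (n k : nat) (y : nat -> 'rV[R]_d) :
  0 <= qexp d alpha -> (forall z, 0 <= xiT alpha xi T w z) ->
  (k <= n)%N -> (forall j, (k <= j <= n)%N -> LT alpha T (y j)) -> y n = 0 ->
  hT alpha xi T w (y k) <= \sum_(k.+1 <= j < n.+1) stp alpha xi T w y j.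
Proof.
move=> Hq Hx kn HL yn.
have HB := @hT_lb _ _ _ _ xi T w (y k) Hq Hx.
rewrite /hT; apply: (ge_inf HB).
exists (n - k)%N, (fun j => y (j + k)%N); split.
- move=> j jn; apply: HL; apply/andP; split; first exact: leq_addl.
  by rewrite -(subnK kn) leq_add2r.
- by [].
- by rewrite subnK.
- rewrite -{1}(add0n k.+1) -addSnnS big_addn /=.
  rewrite subSn //; apply: eq_big_nat => j /andP[j1 _]; rewrite /stp.
  by case: j j1 => // j _; rewrite addSn.
Qed.

Lemma LT_toZ (R : realType) d (alpha T : R) (z : 'rV[R]_d) : LT alpha T z ->
  forall i, rT d alpha T * z 0 i = (toZ alpha T z 0 i)%:~R.
Proof. by move=> [k Hk] i; rewrite /toZ mxE Hk intrKfloor. Qed.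

Lemma LT_row (R : realType) d (alpha T : R) (W : 'rV[int]_d) : 0 < rT d alpha T ->
  LT alpha T (\row_i ((W 0 i)%:~R / rT d alpha T)) /\
  toZ alpha T (\row_i ((W 0 i)%:~R / rT d alpha T)) = W.
Proof.
move=> r0; have Hr : rT d alpha T != 0 by rewrite gt_eqF.
have E : forall i, rT d alpha T * (\row_i ((W 0 i)%:~R / rT d alpha T)) 0 i = (W 0 i)%:~R.
  by move=> i; rewrite mxE mulrC divfK.
split; first by exists W.
by apply/rowP => i; rewrite /toZ !mxE mulrC divfK // intrKfloor.
Qed.

Lemma roundT_row (R : realType) d (alpha T : R) (z : 'rV[R]_d) :
  roundT alpha T z = \row_i (((toZ alpha T z) 0 i)%:~R / rT d alpha T).
Proof. by apply/rowP => i; rewrite !mxE. Qed.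

Lemma roundT_LT (R : realType) d (alpha T : R) (z : 'rV[R]_d) : 0 < rT d alpha T ->
  LT alpha T (roundT alpha T z).
Proof. by move=> r0; rewrite roundT_row; case: (LT_row (toZ alpha T z) r0). Qed.

Lemma roundT_id (R : realType) d (alpha T : R) (z : 'rV[R]_d) : 0 < rT d alpha T ->
  LT alpha T z -> roundT alpha T z = z.
Proof.
move=> r0 Hz; apply/rowP => i; rewrite mxE.
have := LT_toZ Hz i; rewrite /toZ mxE => <-.
by rewrite mulrAC divff ?mul1r // gt_eqF.
Qed.

Lemma roundT_close (R : realType) d (alpha T : R) (z : 'rV[R]_d) : 0 < rT d alpha T ->
  norm1 (z - roundT alpha T z) <= d%:R / rT d alpha T.
Proof.
move=> r0; rewrite /norm1.
apply: (@le_trans _ _ (\sum_(i < d) (1 / rT d alpha T))).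
  apply: ler_sum => i _; rewrite !mxE.
  set r := rT d alpha T; set x := r * z 0 i.
  have -> : z 0 i - (Num.floor x)%:~R / r = (x - (Num.floor x)%:~R) / r.
    by rewrite mulrBl /x mulrAC divff ?mul1r // gt_eqF.
  have /andP[h1 h2] := floor_itv x.
  rewrite normrM normfV (gtr0_norm r0) ler_pM2r ?invr_gt0 //.
  rewrite ger0_norm ?subr_ge0 //.
  by rewrite lerBlDl; apply: ltW; move: h2; rewrite intrD addrC.
by rewrite sumr_const card_ord mul1r mulr_natl.
Qed.

Lemma region_LT (R : realType) d (alpha T : R) (z : 'rV[R]_d) (rho : R) : 0 < rT d alpha T ->
  LT alpha T z -> norm1 z <= rho ->
  forall i, `|((toZ alpha T z 0 i)%:~R : R)| <= rT d alpha T * rho.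
Proof.
move=> r0 Hz Hn i; rewrite -(LT_toZ Hz) normrM (gtr0_norm r0) ler_pM2l //.
exact: le_trans (norm1_coord z i) Hn.
Qed.

Lemma split_cost (R : realType) (F : nat -> R) (k n : nat) : (k <= n)%N ->
  \sum_(1 <= j < n.+1) F j = \sum_(1 <= j < k.+1) F j + \sum_(k.+1 <= j < n.+1) F j.
Proof. by move=> kn; rewrite (@big_cat_nat _ _ _ k.+1). Qed.

Lemma step_bound (R : realType) d (alpha : R) (Omega : Type) (xi : 'rV[int]_d -> Omega -> R)
  T w (y : nat -> 'rV[R]_d) (j : nat) (M : R) :
  0 < qexp d alpha -> 0 < xiT alpha xi T w (y j) <= M ->
  norm1 (y j.-1 - y j) <= M / qexp d alpha * stp alpha xi T w y j.
Proof.
move=> Hq /andP[c0 cM]; rewrite /stp.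
set q := qexp d alpha; set c := xiT alpha xi T w (y j); set N := norm1 _.
have M0 : 0 < M by exact: lt_le_trans cM.
have -> : M / q * (q * N / c) = M / c * N.
  by field; rewrite ?gt_eqF // ?Hq ?c0.
rewrite ler_peMl ?norm1_ge0 //.
by rewrite ler_pdivlMr // mul1r.
Qed.

Lemma path_dist (R : realType) d (alpha : R) (Omega : Type) (xi : 'rV[int]_d -> Omega -> R)
  T w (y : nat -> 'rV[R]_d) (M : R) (k m : nat) :
  0 < qexp d alpha -> (k <= m)%N ->
  (forall j, (k < j <= m)%N -> 0 < xiT alpha xi T w (y j) <= M) ->
  norm1 (y k - y m) <= M / qexp d alpha * \sum_(k.+1 <= j < m.+1) stp alpha xi T w y j.
Proof.
move=> Hq; elim: m => [|m IH].
  by rewrite leqn0 => /eqP -> _; rewrite subrr big_geq // mulr0 /norm1 big1 // => i _; rewrite mxE normr0.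
rewrite leq_eqVlt => /orP[/eqP -> _|km H].
  by rewrite subrr big_geq // mulr0 /norm1 big1 // => i _; rewrite mxE normr0.
rewrite big_nat_recr //= mulrDr.
apply: le_trans (norm1_tri _ (y m) _) _; apply: lerD.
  apply: IH => // j /andP[kj jm]; apply: H; rewrite kj /=; exact: leqW.
by apply: (@step_bound _ _ _ _ xi T w y m.+1 M Hq); apply: H; rewrite km leqnn.
Qed.

Lemma norm1_0 (R : realType) d : norm1 (0 : 'rV[R]_d) = 0.
Proof. by rewrite /norm1 big1 // => i _; rewrite mxE normr0. Qed.

Lemma stay_in (R : realType) d (alpha : R) (Omega : Type) (xi : 'rV[int]_d -> Omega -> R)
  T w (n : nat) (y : nat -> 'rV[R]_d) (M rho : R) :
  0 < qexp d alpha -> 0 <= rho -> (forall z, 0 <= xiT alpha xi T w z) ->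
  (forall z, LT alpha T z -> norm1 z <= rho -> 0 < xiT alpha xi T w z <= M) ->
  (forall j, (j <= n)%N -> LT alpha T (y j)) -> y n = 0 ->
  M / qexp d alpha * \sum_(1 <= j < n.+1) stp alpha xi T w y j < rho ->
  forall j, (j <= n)%N -> norm1 (y j) <= rho.
Proof.
move=> Hq Hr Hx Hreg HL yn HC.
suff H : forall i, (i <= n)%N -> forall j, (n - i <= j <= n)%N -> norm1 (y j) <= rho.
  by move=> j jn; apply: (H n (leqnn n)); rewrite subnn jn.
elim => [_ j|i IH iS j].
  rewrite subn0 => /andP[a b]; have -> : j = n by apply/eqP; rewrite eqn_leq a b.
  by rewrite yn norm1_0.
move=> /andP[a b].
have [c|c] := leqP (n - i) j.
  by apply: (IH (ltnW iS)); rewrite c b.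
have jE : j = (n - i.+1)%N by lia.
have jn : (j <= n)%N by lia.
have M0 : 0 <= M / qexp d alpha.
  have := Hreg (y n) (HL n (leqnn n)); rewrite yn norm1_0 => /(_ Hr) /andP[c0 cM].
  by apply: divr_ge0; [exact: ltW (lt_le_trans c0 cM)|exact: ltW].
have := @path_dist _ _ _ _ xi T w y M j n Hq jn.
rewrite yn subr0 => H; apply: le_trans (H _) _.
  move=> j' /andP[jj' j'n]; apply: Hreg; first exact: HL.
  by apply: IH; [exact: ltnW| apply/andP; split; [lia|]].
apply: ltW; apply: le_lt_trans HC; apply: ler_wpM2l => //.
rewrite (split_cost _ jn) lerDr; apply: sumr_ge0 => k _.
apply: stp_ge0 => //; exact: ltW.
Qed.

Definition tr (R : realType) (x : R) : int :=
  if 0 <= x then Num.floor x else - Num.floor (- x).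

Lemma tr_spec (R : realType) (x : R) :
  `|((tr x)%:~R : R)| <= `|x| /\ `|x - (tr x)%:~R| < 1.
Proof.
rewrite /tr; case: ifP => x0.
  have /andP[h1 h2] := floor_itv x.
  have f0 : 0 <= ((Num.floor x)%:~R : R).
    by rewrite ler0z floor_ge0.
  rewrite (ger0_norm f0) (ger0_norm x0); split => //.
  rewrite ger0_norm ?subr_ge0 //; move: h2; rewrite intrD; lra.
have x0' : 0 <= - x by rewrite oppr_ge0 ltW // ltNge x0.
have /andP[h1 h2] := floor_itv (- x).
have f0 : 0 <= ((Num.floor (- x))%:~R : R).
  by rewrite ler0z floor_ge0.
rewrite mulrNz normrN (ger0_norm f0) -normrN (ger0_norm x0'); split => //.
rewrite opprK addrC ler0_norm; last by move: h1; lra.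
move: h2; rewrite intrD; lra.
Qed.

Lemma jump (R : realType) d (alpha T : R) (p u : 'rV[R]_d) (lam : R) :
  0 < rT d alpha T -> LT alpha T p -> LT alpha T u -> 0 <= lam <= 1 ->
  exists w, [/\ LT alpha T w, norm1 (w - u) <= lam * norm1 (p - u) &
    norm1 (p - w) <= (1 - lam) * norm1 (p - u) + d%:R / rT d alpha T].
Proof.
move=> r0 Hp Hu /andP[l0 l1].
set r := rT d alpha T.
pose Pz := toZ alpha T p; pose Uz := toZ alpha T u.
have rn0 : r != 0 by rewrite gt_eqF.
have pE : forall i, p 0 i = (Pz 0 i)%:~R / r.
  by move=> i; rewrite -(LT_toZ Hp) mulrAC divff ?mul1r.
have uE : forall i, u 0 i = (Uz 0 i)%:~R / r.
  by move=> i; rewrite -(LT_toZ Hu) mulrAC divff ?mul1r.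
clearbody Pz Uz.
pose D i : R := (Pz 0 i)%:~R - (Uz 0 i)%:~R.
pose m i := tr (lam * D i).
pose Wz : 'rV[int]_d := \row_i (Uz 0 i + m i).
pose w := \row_i ((Wz 0 i)%:~R / r).
have [HLw _] := LT_row Wz r0.
have Npu : norm1 (p - u) = \sum_(i < d) `|D i| / r.
  apply: eq_bigr => i _; rewrite !mxE pE uE -mulrBl normrM normfV (gtr0_norm r0).
  by [].
exists w; split => //.
- apply: (@le_trans _ _ (\sum_(i < d) lam * (`|D i| / r))).
    apply: ler_sum => i _; rewrite !mxE uE intrD mulrDl addrAC subrr add0r.
    rewrite normrM normfV (gtr0_norm r0) mulrA ler_pM2r ?invr_gt0 //.
    have [h _] := tr_spec (lam * D i).
    by apply: le_trans h _; rewrite normrM (ger0_norm l0).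
  by rewrite Npu mulr_sumr.
- apply: (@le_trans _ _ (\sum_(i < d) ((1 - lam) * (`|D i| / r) + 1 / r))).
    apply: ler_sum => i _; rewrite !mxE pE intrD.
    have -> : (Pz 0 i)%:~R / r - ((Uz 0 i)%:~R + (m i)%:~R) / r = (D i - (m i)%:~R) / r.
      by rewrite /D; field.
    rewrite normrM normfV (gtr0_norm r0) mulrA -mulrDl ler_pM2r ?invr_gt0 //.
    have [_ h] := tr_spec (lam * D i).
    have e : D i - (m i)%:~R = (D i - lam * D i) + (lam * D i - (m i)%:~R) by rewrite addrA subrK.
    rewrite e; apply: le_trans (ler_normD _ _) _; apply: lerD; last exact: ltW.
    have -> : D i - lam * D i = (1 - lam) * D i by rewrite mulrBl mul1r.
    have l1' : 0 <= 1 - lam by rewrite subr_ge0.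
    by rewrite normrM (ger0_norm l1').
  rewrite big_split /= Npu mulr_sumr lerD2l sumr_const card_ord mul1r mulr_natl //.
Qed.

Lemma det_main (R : realType) d (alpha : R) (Omega : Type) (xi : 'rV[int]_d -> Omega -> R)
  T w (M rho eta delta tinf : R) :
  0 < qexp d alpha -> 0 < rT d alpha T -> 0 < M ->
  (forall z, 0 < xiT alpha xi T w z) ->
  (forall z, LT alpha T z -> norm1 z <= rho -> xiT alpha xi T w z <= M) ->
  0 < eta -> 0 <= rho -> M / qexp d alpha * (tinf + 2 * eta) < rho ->
  2 * (d%:R / rT d alpha T) + M / qexp d alpha * (2 * eta) <= delta ->
  forall t, 0 <= t <= tinf ->
    sT alpha xi T w (t + eta) `<=` \bigcup_(y in sT alpha xi T w t) ball1 y delta.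
Proof.
move=> Hq r0 M0 Hpos Hreg eta0 rho0 Hrho Hdel t /andP[t0 tt] z Hz.
set q := qexp d alpha in Hq Hrho Hdel *; set r := rT d alpha T in r0 Hdel *.
have Hx : forall z, 0 <= xiT alpha xi T w z by move=> z'; exact: ltW.
have Hreg' : forall z, LT alpha T z -> norm1 z <= rho -> 0 < xiT alpha xi T w z <= M.
  by move=> z' a b; rewrite Hpos Hreg.
have Mq : 0 < M / q by exact: divr_gt0.
set y0 := roundT alpha T z.
have HL0 : LT alpha T y0 by exact: roundT_LT.
have Hz0 : norm1 (z - y0) <= d%:R / r by exact: roundT_close.
have {}Hz : hT alpha xi T w y0 <= t + eta := Hz.
have [s [n [y [HLy y0E ynE ->]]] Cl] : exists2 s, [set s : R | exists (n : nat) (y : nat -> 'rV[R]_d),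
        [/\ (forall j, (j <= n)%N -> LT alpha T (y j)), y 0%N = y0, y n = 0 &
            s = \sum_(1 <= j < n.+1) qexp d alpha * norm1 (y j.-1 - y j) / xiT alpha xi T w (y j)]] s
      & s < t + 2 * eta.
  apply: inf_lt.
    exists (qexp d alpha * norm1 (y0 - 0) / xiT alpha xi T w 0), 1%N, (fun j => if j == 0%N then y0 else 0).
    split => //; last by rewrite big_nat1.
    move=> [_|[_|j //]]; first exact: HL0.
    by rewrite /LT /=; exists 0 => i; rewrite !mxE mulr0.
  by apply: le_lt_trans Hz _; lra.
set C := \sum_(1 <= j < n.+1) _ in Cl.
have CE : C = \sum_(1 <= j < n.+1) stp alpha xi T w y j by [].
have Hin : forall j, (j <= n)%N -> norm1 (y j) <= rho.
  apply: (stay_in Hq rho0 Hx Hreg' HLy ynE); rewrite -CE.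
  apply: le_lt_trans Hrho; rewrite ler_pM2l //; lra.
have Hc : forall j, (j <= n)%N -> 0 < xiT alpha xi T w (y j) <= M.
  by move=> j jn; apply: Hreg'; [exact: HLy|exact: Hin].
pose suf k := \sum_(k.+1 <= j < n.+1) stp alpha xi T w y j.
have Pn : (suf n <= t) by rewrite /suf big_geq.
have [k Pk kmin] := ex_minnP (ex_intro (fun k => suf k <= t) n Pn).
have kn : (k <= n)%N := kmin n Pn.
case: k Pk kmin kn => [|k'] Pk kmin kn.
  exists y0.
    rewrite /sT /= roundT_id // -{1}y0E.
    have H := @hT_suffix _ _ _ _ xi T w n 0 y (ltW Hq) Hx (leq0n n).
    apply: le_trans (H _ ynE) Pk.
    by move=> j /andP[_ jn]; exact: HLy.
  rewrite /ball1 /=; apply: le_lt_trans Hz0 _.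
  have : 0 < M / q * (2 * eta) by apply: mulr_gt0; [exact: Mq|lra].
  have : 0 <= d%:R / r by apply: divr_ge0; [exact: ler0n|exact: ltW].
  move: Hdel; lra.
have nP : t < suf k'.
  rewrite ltNge; apply/negP => H; have := kmin k' H; by rewrite ltnn.
have k'n : (k' <= n)%N by exact: ltnW.
have sufE : suf k' = stp alpha xi T w y k'.+1 + suf k'.+1.
  by rewrite /suf big_ltn.
have Pk' : suf k'.+1 <= t := Pk.
set p := y k'; set u := y k'.+1.
have /andP[c0 cM] := Hc k'.+1 kn.
set c := xiT alpha xi T w u in c0 cM.
set N := norm1 (p - u).
set sk := stp alpha xi T w y k'.+1 in sufE.
have skE : sk = q * N / c by [].
have sk0 : 0 < sk by move: nP; rewrite sufE; lra.
set lam := (t - suf k'.+1) / sk.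
have lam0 : 0 <= lam by apply: divr_ge0; [lra|exact: ltW].
have lam1 : lam <= 1.
  by rewrite /lam ler_pdivrMr // mul1r; move: nP; rewrite sufE; lra.
have lamE : lam * sk = t - suf k'.+1 by rewrite /lam divfK // gt_eqF.
have [wv [HLw Hw1 Hw2]] := @jump _ _ alpha T p u lam r0 (HLy k' k'n) (HLy k'.+1 kn)
  (introT andP (conj lam0 lam1)).
exists wv.
  rewrite /sT /= roundT_id //.
  pose y2 := fun j => if j == k' then wv else y j.
  have H := @hT_suffix _ _ _ _ xi T w n k' y2 (ltW Hq) Hx k'n.
  have y2n : y2 n = 0 by rewrite /y2 ifF ?ynE // gtn_eqF.
  have := H _ y2n.
  rewrite /y2 eqxx => H2; apply: le_trans (H2 _) _.
    by move=> j /andP[_ jn]; case: eqP => _ //; exact: HLy.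
  rewrite big_ltn //.
  have h3 : (k'.+1 == k') = false by apply/negbTE/eqP; clear; lia.
  rewrite {1}/stp /= h3 eqxx.
  have -> : \sum_(k'.+2 <= j < n.+1) stp alpha xi T w (fun j => if j == k' then wv else y j) j
     = suf k'.+1.
    apply: eq_big_nat => j /andP[j1 _].
    have h1 : (j == k') = false by apply/negbTE/eqP; clear -j1; lia.
    have h2 : (j.-1 == k') = false by apply/negbTE/eqP; clear -j1; lia.
    by rewrite /stp /= h1 h2.
  rewrite -/u -/c -/q.
  have : q * norm1 (wv - u) / c <= q * (lam * N) / c.
    by rewrite ler_pM2r ?invr_gt0 // ler_pM2l.
  have -> : q * (lam * N) / c = lam * sk by rewrite skE; field; rewrite gt_eqF.
  lra.
rewrite /ball1 /=.
have Hpre := @path_dist _ _ _ _ xi T w y M 0 k' Hq (leq0n k').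
rewrite y0E in Hpre.
have {}Hpre := Hpre (fun j jk => Hc j (leq_trans (andP jk).2 k'n)).
have CE2 := split_cost (stp alpha xi T w y) k'n.
rewrite -CE -/(suf k') in CE2.
set pre := \sum_(1 <= j < k'.+1) stp alpha xi T w y j in CE2 Hpre.
have E1 : (1 - lam) * N = c / q * (suf k' - t).
  have N0 : N != 0 by apply/eqP => N0; move: sk0; rewrite skE N0 mulr0 mul0r ltxx.
  rewrite /lam sufE skE; field.
  by rewrite N0 !gt_eqF.
have E2 : c / q * (suf k' - t) <= M / q * (suf k' - t).
  by apply: ler_wpM2r; [lra|rewrite ler_pM2r ?invr_gt0].
have E3 : M / q * pre + M / q * (suf k' - t) < M / q * (2 * eta).
  by rewrite -mulrDr ltr_pM2l //; lra.
have T1 := norm1_tri z y0 wv.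
have T2 := norm1_tri y0 p wv.
move: Hz0 Hpre Hw2 E1 E2 E3 T1 T2 Hdel; rewrite -/N; lra.
Qed.

Lemma Tbig (R : realType) (L : R) : 0 <= L ->
  exists T0 : R, forall T, T0 <= T -> 1 < T /\ 0 < ln T /\ L <= T / ln T.
Proof.
move=> L0; exists ((2 * L + 2) ^+ 2) => T HT.
have T1 : 4 <= T by apply: le_trans HT; rewrite expr2; nra.
have T0 : 0 <= T by lra.
set s := Num.sqrt T.
have sE : s ^+ 2 = T by rewrite sqr_sqrtr.
have s2 : 2 * L + 2 <= s.
  have : Num.sqrt ((2 * L + 2) ^+ 2) <= s by rewrite ler_sqrt.
  by rewrite sqrtr_sqr ger0_norm //; lra.
have s0 : 0 < s by lra.
have lnT : ln T = 2 * ln s by rewrite -sE lnXn // mulr_natl.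
have lns : ln s <= s - 1.
  have := @le_ln1Dx R (s - 1); rewrite addrCA subrr addr0; apply; lra.
have lnpos : 0 < ln s by apply: ln_gt0; lra.
split; first lra.
split; first by rewrite lnT; lra.
rewrite lnT ler_pdivlMr; last lra.
rewrite -sE expr2; nra.
Qed.

Lemma mset_gt (R : realType) d (dO : measure_display) (Omega : measurableType dO)
  (xi : 'rV[int]_d -> Omega -> R) z (c : R) :
  measurable_fun setT (xi z) -> measurable [set w | c < xi z w].
Proof.
move=> Hm; have := Hm measurableT _ (measurable_itv `]c, +oo[).
rewrite setTI; congr measurable; apply/seteqP; split => w /=; by rewrite in_itv /= andbT.
Qed.

Lemma prob_bound (R : realType) d (alpha : R)
  (dO : measure_display) (Omega : measurableType dO) (P : probability Omega R)
  (xi : 'rV[int]_d -> Omega -> R) (N : nat) (x : R) :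
  (forall z, measurable_fun setT (xi z)) ->
  (forall z (x : R), 1 <= x -> P [set w | x < xi z w] = (x `^ (- alpha))%:E) ->
  1 <= x ->
  exists A : set Omega, [/\ measurable A,
   (forall w, A w -> forall z, 1 < xi z w),
   (forall w, A w -> forall k : 'rV[int]_d, (forall i, `|k 0 i| <= N%:Z) -> xi k w <= x) &
   ((1 - ((2 * N).+1 ^ d)%:R * x `^ (- alpha))%:E <= P A)%E ].
Proof.
move=> Hm Ht x1.
pose g (f : {ffun 'I_d -> 'I_(2 * N).+1}) : 'rV[int]_d := \row_i ((f i : nat)%:Z - N%:Z).
pose S := map g (enum {ffun 'I_d -> 'I_(2 * N).+1}).
have Ssize : size S = ((2 * N).+1 ^ d)%N by rewrite size_map -cardE card_ffun !card_ord.
have Smem : forall k : 'rV[int]_d, (forall i, `|k 0 i| <= N%:Z) -> k \in S.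
  move=> k Hk.
  pose f : {ffun 'I_d -> 'I_(2 * N).+1} := [ffun i => inord (absz (k 0 i + N%:Z))].
  have -> : k = g f.
    apply/rowP => i; rewrite /g !mxE ffunE inordK.
      have h : 0 <= k 0 i + N%:Z by have := Hk i; clear; lia.
      by rewrite gez0_abs //; lia.
    by have := Hk i; clear; lia.
  by apply: map_f; rewrite mem_enum.
pose N0 := \bigcup_n [set w | xi (odflt 0 (unpickle n)) w <= 1].
have HN0 : P.-negligible N0.
  apply: negligible_bigcup => n.
  have E : [set w | xi (odflt 0 (unpickle n)) w <= 1] = ~` [set w | 1 < xi (odflt 0 (unpickle n)) w].
    by apply/seteqP; split => w /=; rewrite leNgt => /negP.
  exists [set w | xi (odflt 0 (unpickle n)) w <= 1]; rewrite E; split => //.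
    by apply: measurableC; exact: mset_gt.
  have HC := @probability_setC _ _ _ P _ (mset_gt 1 (Hm (odflt 0 (unpickle n)))).
  rewrite Ht // powR1 subee // in HC; exact: HC.
have [B [mB PB NB]] := HN0.
pose Aseq i := [set w | x < xi (nth 0 S i) w].
pose Box := \big[setU/set0]_(i < size S) Aseq i.
have mBox : measurable Box by apply: bigsetU_measurable => i _; exact: mset_gt.
exists (~` (B `|` Box)); split.
- by apply: measurableC; apply: measurableU.
- move=> w /= Hw z; rewrite ltNge; apply/negP => Hz; apply: Hw; left; apply: NB.
  by exists (pickle z) => //; rewrite pickleK.
- move=> w /= Hw k Hk; rewrite leNgt; apply/negP => Hz; apply: Hw; right.
  rewrite /Box -bigcup_mkord; exists (index k S).
    by rewrite /= index_mem; exact: Smem.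
  by rewrite /Aseq /= nth_index //; exact: Smem.
- rewrite probability_setC; last by apply: measurableU.
  have h1 : (P (B `|` Box) <= P B + P Box)%E by apply: measureU2.
  have h2 : (P Box <= \sum_(i < size S) P (Aseq i))%E.
    by apply: Boole_inequality => i _; exact: mset_gt.
  have h3 : (\sum_(i < size S) P (Aseq i) = (((2 * N).+1 ^ d)%:R * x `^ (- alpha))%:E)%E.
    under eq_bigr do rewrite Ht //.
    by rewrite sumEFin sumr_const card_ord Ssize mulr_natl.
  rewrite PB add0e h3 in h1 h2.
  have h4 := le_trans h1 h2.
  have h5 : (0 <= P (B `|` Box))%E by [].
  move: h4 h5; case: (P (B `|` Box)) => [r| |] //=.
  rewrite !lee_fin => h4 h5; lra.
Qed.

Lemma qexp_gt0 (R : realType) d (alpha : R) : (0 < d)%N -> d%:R < alpha -> 0 < qexp d alpha.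
Proof. by move=> d0 da; rewrite /qexp divr_gt0 ?ltr0n // subr_gt0. Qed.

Lemma count_bound (R : realType) d (alpha B M K eps rho : R) (N : nat) :
  (0 < d)%N -> d%:R < alpha -> 1 <= B -> 1 <= M -> 0 < K -> 0 < eps -> 1 <= rho ->
  rho <= M * K -> (3 * K) ^+ d / eps <= M `^ (alpha - d%:R) ->
  N%:R <= B `^ (qexp d alpha + 1) * rho ->
  ((2 * N).+1 ^ d)%:R * (M * B `^ qexp d alpha) `^ (- alpha) <= eps.
Proof.
move=> d0 da B1 M1 K0 e0 rho1 rhoMK HM HN.
have q0 := qexp_gt0 d0 da.
set q := qexp d alpha in q0 HN *.
set r := B `^ (q + 1) in HN *.
set a := B `^ q.
have B0 : 0 < B by lra.
have r1 : 1 <= r.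
  by rewrite /r; have := @ler_powR _ B B1 0 (q + 1); rewrite powRr0; apply; lra.
have M0 : 0 < M by lra.
have a0 : 0 < a by exact: powR_gt0.
have E1 : ((2 * N).+1 ^ d)%:R = (2 * N%:R + 1 : R) ^+ d by rewrite natrX -addn1 natrD natrM.
have H1 : (2 * N%:R + 1 : R) ^+ d <= (r * M * K * 3) ^+ d.
  have N0 := ler0n R N.
  have rr : 1 <= r * rho by nra.
  have rM : 0 <= r * M * K * 3 by nra.
  apply: lerXn2r; rewrite ?nnegrE; try lra.
  have : r * rho <= r * (M * K) by rewrite ler_pM2l //; lra.
  lra.
have E2 : (r * M * K * 3) ^+ d = (3 * K) ^+ d * M ^+ d * r ^+ d.
  by rewrite !exprMn; ring.
have E3 : (M * a) `^ (- alpha) = M `^ (- alpha) * a `^ (- alpha) by rewrite powRM //; lra.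
have E4 : M ^+ d * M `^ (- alpha) = (M `^ (alpha - d%:R))^-1.
  rewrite -powR_mulrn; last lra.
  rewrite -powRD; last by rewrite (gt_eqF M0) implybT.
  by rewrite -powRN opprB.
have E5 : r ^+ d * a `^ (- alpha) = 1.
  rewrite -powR_mulrn; last exact: powR_ge0.
  rewrite /r /a -!powRrM -powRD; last by rewrite (gt_eqF B0) implybT.
  have -> : (q + 1) * d%:R + q * - alpha = 0.
    rewrite /q /qexp; field; rewrite subr_eq0; apply/eqP => h; move: da; rewrite h ltxx //.
  by rewrite powRr0.
have Mp : 0 < M `^ (alpha - d%:R) by exact: powR_gt0.
have Xe : (3 * K) ^+ d <= eps * M `^ (alpha - d%:R).
  by have := ler_wpM2r (ltW e0) HM; rewrite divfK ?gt_eqF // [_ * eps]mulrC.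
have P0 : 0 <= (M * a) `^ (- alpha) by exact: powR_ge0.
set A := (3 * K) ^+ d in E2 Xe.
have S1 : (2 * N%:R + 1 : R) ^+ d * (M * a) `^ (- alpha) <= A * M ^+ d * r ^+ d * (M * a) `^ (- alpha).
  by apply: ler_wpM2r => //; rewrite -E2.
have S2 : A * M ^+ d * r ^+ d * (M * a) `^ (- alpha) = A / M `^ (alpha - d%:R).
  rewrite E3; have -> : A * M ^+ d * r ^+ d * (M `^ (- alpha) * a `^ (- alpha)) =
    A * (M ^+ d * M `^ (- alpha)) * (r ^+ d * a `^ (- alpha)) by ring.
  by rewrite E4 E5 mulr1.
by rewrite E1; apply: le_trans S1 _; rewrite S2 ler_pdivrMr // mulrC.
Qed.

Lemma int_trunc (R : realType) (k : int) (y : R) :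
  `|(k%:~R : R)| <= y -> `|k| <= (Num.trunc y)%:Z.
Proof.
move=> H; have y0 : 0 <= y by exact: le_trans (normr_ge0 _) H.
rewrite -abszE lez_nat truncn_ge_nat // natr_absz intr_norm //.
Qed.

Unset Implicit Arguments.

Theorem lemma6p1 (R : realType) (d : nat) (alpha : R)
  (dO : measure_display) (Omega : measurableType dO) (P : probability Omega R)
  (xi : 'rV[int]_d -> Omega -> R) :
  (0 < d)%N -> d%:R < alpha -> iid_pareto alpha P xi ->
  forall tinf delta eps : R, 0 < tinf -> 0 < delta -> 0 < eps ->
  exists eta : R, 0 < eta /\
  exists T0 : R, forall T : R, T0 <= T ->
  exists A : set Omega, [/\ measurable A,
    A `<=` [set w | forall t : R, 0 <= t <= tinf ->
       sT alpha xi T w (t + eta) `<=`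
       \bigcup_(y in sT alpha xi T w t) ball1 y delta] &
    ((1 - eps)%:E <= P A)%E].
Proof.
move=> d0 da [Hm Ht _] tinf delta eps t0 de0 e0.
have q0 := qexp_gt0 d0 da.
pose K := tinf / qexp d alpha + delta / 2 + 1.
have K0 : 0 < K.
  have : 0 <= tinf / qexp d alpha by apply: divr_ge0; exact: ltW.
  rewrite /K; lra.
pose X := (3 * K) ^+ d.
have X0 : 0 <= X by apply: exprn_ge0; lra.
have ad : 0 < alpha - d%:R by rewrite subr_gt0.
pose Y := (X / eps) `^ (alpha - d%:R)^-1.
pose M := Num.max 1 Y.
have M1 : 1 <= M by rewrite le_max lexx.
have YM : Y <= M by rewrite le_max lexx orbT.
have HM : X / eps <= M `^ (alpha - d%:R).
  have XY : X / eps = Y `^ (alpha - d%:R).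
    rewrite /Y -powRrM mulVf ?gt_eqF // powRr1 //; apply: divr_ge0 => //; exact: ltW.
  rewrite XY; apply: ge0_ler_powR => //; first exact: ltW.
    by rewrite nnegrE powR_ge0.
  by rewrite nnegrE; lra.
have M0 : 0 < M by lra.
pose eta := delta * qexp d alpha / (4 * M).
have eta0 : 0 < eta by rewrite /eta; apply: divr_gt0; [apply: mulr_gt0|]; lra.
exists eta; split => //.
pose rho := M / qexp d alpha * tinf + delta / 2 + 1.
have rhoE : M / qexp d alpha * (tinf + 2 * eta) = M / qexp d alpha * tinf + delta / 2.
  rewrite /eta; field; rewrite !gt_eqF //.
have Mq : 0 <= M / qexp d alpha * tinf by apply: mulr_ge0; [apply: divr_ge0|]; lra.
have rho1 : 1 <= rho by rewrite /rho; lra.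
have [T0 HT0] := @Tbig R (1 + 4 * d%:R / delta) ltac:(have := ler0n R d; move=> h; apply: addr_ge0 => //; apply: divr_ge0; lra).
exists T0 => T HT.
have [T1 [lnT0 HL]] := HT0 T HT.
have B1 : 1 <= T / ln T.
  by apply: le_trans HL; rewrite lerDl; apply: divr_ge0; [rewrite mulr_ge0 ?ler0n|]; lra.
have r0 : 0 < rT d alpha T by rewrite /rT powR_gt0 //; lra.
have rB : T / ln T <= rT d alpha T by rewrite /rT le1r_powR //; lra.
have a1 : 1 <= aT d alpha T.
  by rewrite /aT; have := @ler_powR _ (T / ln T) B1 0 (qexp d alpha); rewrite powRr0; apply; lra.
have a0 : 0 < aT d alpha T by lra.
pose x := M * aT d alpha T.
have x1 : 1 <= x by rewrite /x; nra.
pose N := Num.trunc (rT d alpha T * rho).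
have [A [mA Apos Abox PA]] := @prob_bound R d alpha dO Omega P xi N x Hm Ht x1.
exists A; split => //.
  move=> w Aw t tt.
  apply: (@det_main R d alpha Omega xi T w M rho eta delta tinf q0 r0 M0) => //.
  - by move=> z; rewrite /xiT divr_gt0 //; exact: lt_trans ltr01 (Apos w Aw _).
  - move=> z Lz nz; rewrite /xiT ler_pdivrMr //; apply: (Abox w Aw) => i.
    by apply: int_trunc; exact: region_LT.
  - lra.
  - by rewrite rhoE /rho; lra.
  - have h1 : 4 * d%:R / delta <= rT d alpha T by lra.
    have h2 : 4 * d%:R <= rT d alpha T * delta by rewrite -ler_pdivrMr.
    have h3 : d%:R / rT d alpha T <= delta / 4 by rewrite ler_pdivrMr //; nra.
    have h4 : M / qexp d alpha * (2 * eta) = delta / 2.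
      by rewrite /eta; field; rewrite !gt_eqF.
    lra.
apply: le_trans PA; rewrite lee_fin lerD2l lerN2.
apply: (@count_bound R d alpha (T / ln T) M K eps rho N) => //.
- have : 1 * (delta / 2 + 1) <= M * (delta / 2 + 1) by rewrite ler_wpM2r //; lra.
  rewrite /rho /K.
  have -> : M / qexp d alpha * tinf = M * (tinf / qexp d alpha) by ring.
  rewrite mulrDr mulrDr; lra.
- rewrite truncn_le; apply: mulr_ge0; lra.
Qed.
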